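(* For any $\delta\le1/4$, if $\mathcal{I}=([n],[m],\mathcal{V})$ is a $\delta$-ONI instance, then $m\ge 2n$.
   Context: Valuations are additive. $\mathrm{MMS}_i$ is the maximum over partitions of the goods into $n$ bundles of the minimum bundle value for agent $i$. The instance is ordered if $v_i(1)\ge\dots\ge v_i(m)$ for all $i$; normalized if every agent $i$ has an MMS partition into $n$ bundles each of value exactly $1$ to $i$; $\alpha$-irreducible if for every agent $i$: $v_i(1)<\alpha$, $v_i(\{2n-1,2n,2n+1\})<\alpha$, $v_i(\{3n-2,3n-1,3n,3n+1\})<\alpha$, $v_i(\{1,2n+1\})<\alpha$ (each condition only when the goods exist). $\delta$-ONI means ordered, normalized and $(3/4+\delta)$-irreducible. *)

(* Defs.v *)
From mathcomp Require Import all_boot all_order all_algebra.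
Set Implicit Arguments. Unset Strict Implicit. Unset Printing Implicit Defensive.
Import Order.TTheory GRing.Theory Num.Theory.
Local Open Scope ring_scope.

(* Instance ([n],[m],V): agents 'I_n, goods 'I_m; the good numbered j
   (1-based, as in the paper) is the ordinal j-1.  An additive valuation
   of agent i is given by v i : 'I_m -> R (values of single goods). *)

(* value of the good with 1-based number j (0 if it does not exist) *)
Definition good_val {R : realFieldType} {m : nat} (vi : 'I_m -> R) (j : nat) : R :=
  if (insub j.-1 : option 'I_m) is Some g then vi g else 0.

(* a partition of the goods into n (possibly empty) bundles is a map f :
   goods -> bundle index; additive value of bundle k *)
Definition bundle_val {R : realFieldType} {n m : nat} (vi : 'I_m -> R)
  (f : {ffun 'I_m -> 'I_n}) (k : 'I_n) : R :=
  \sum_(g | f g == k) vi g.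

(* f is an MMS partition for vi: its minimum bundle value is maximal over
   all partitions, i.e. for every partition f' the minimum bundle value of
   f' is at most the minimum bundle value of f. *)
Definition is_MMS_partition {R : realFieldType} {n m : nat} (vi : 'I_m -> R)
  (f : {ffun 'I_m -> 'I_n}) : Prop :=
  forall f' : {ffun 'I_m -> 'I_n},
    exists k : 'I_n, forall k' : 'I_n, bundle_val vi f' k <= bundle_val vi f k'.

Definition ordered_inst {R : realFieldType} {n m : nat} (v : 'I_n -> 'I_m -> R) : Prop :=
  forall (i : 'I_n) (g g' : 'I_m), (g <= g')%N -> v i g' <= v i g.

Definition normalized_inst {R : realFieldType} {n m : nat} (v : 'I_n -> 'I_m -> R) : Prop :=
  forall i : 'I_n, exists f : {ffun 'I_m -> 'I_n},
    is_MMS_partition (v i) f /\ forall k : 'I_n, bundle_val (v i) f k = 1.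

Definition irreducible_inst {R : realFieldType} {n m : nat} (alpha : R)
  (v : 'I_n -> 'I_m -> R) : Prop :=
  forall i : 'I_n,
    [/\ (1 <= m)%N -> good_val (v i) 1 < alpha,
        (2 * n + 1 <= m)%N ->
          good_val (v i) (2 * n - 1) + good_val (v i) (2 * n)
          + good_val (v i) (2 * n + 1) < alpha,
        (3 * n + 1 <= m)%N ->
          good_val (v i) (3 * n - 2) + good_val (v i) (3 * n - 1)
          + good_val (v i) (3 * n) + good_val (v i) (3 * n + 1) < alpha
      & (2 * n + 1 <= m)%N ->
          good_val (v i) 1 + good_val (v i) (2 * n + 1) < alpha].

Definition ONI {R : realFieldType} {n m : nat} (delta : R) (v : 'I_n -> 'I_m -> R) : Prop :=
  [/\ ordered_inst v, normalized_inst v & irreducible_inst (3 / 4 + delta) v].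

(* Main.v *)
Require Import Defs.
From mathcomp Require Import all_boot all_order all_algebra.
From mathcomp Require Import lra.
Import Order.TTheory GRing.Theory Num.Theory.
Local Open Scope ring_scope.

Theorem mainTheorem13 (R : realFieldType) (n m : nat) (delta : R)
  (v : 'I_n -> 'I_m -> R) :
  (forall (i : 'I_n) (g : 'I_m), 0 <= v i g) ->
  delta <= 1 / 4 ->
  ONI delta v ->
  (2 * n <= m)%N.
Proof.
move=> v0 hd [hord hnorm hirr].
case: n v v0 hord hnorm hirr => [|n] v v0 hord hnorm hirr; first by [].
pose i : 'I_n.+1 := ord0.
have lt1 : forall g : 'I_m, v i g < 1.
  move=> g.
  have m0 : (0 < m)%N by case: g => [k hk]; apply: leq_ltn_trans hk.
  have [h1 _ _ _] := hirr i.
  have := h1 m0; rewrite /good_val /=.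
  rewrite (insubT (fun k : nat => (k < m)%N) m0) => H.
  apply: le_lt_trans (hord i (Ordinal m0) g (leq0n g)) _.
  apply: lt_le_trans H _.
  lra.
have [f [_ hf]] := hnorm i.
have card2 : forall k, (2 <= #|[pred g | f g == k]|)%N.
  move=> k; rewrite leqNgt ltnS; apply/negP => /card_le1P H.
  have := hf k; rewrite /bundle_val.
  case: (pickP [pred g | f g == k]) => [g /= Hg|H0].
    rewrite (eq_bigl (pred1 g)); last by move=> x; have := H g Hg x.
    rewrite big_pred1_eq => e; by have := lt1 g; rewrite e ltxx.
  rewrite big_pred0; last by move=> x; have := H0 x.
  by move/eqP; rewrite eq_sym oner_eq0.
have -> : m = \sum_(g : 'I_m) 1%N by rewrite sum1_card card_ord.
rewrite (partition_big f predT) //=.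
rewrite -{1}(card_ord n.+1) mulnC -sum_nat_const.
apply: leq_sum => k _; rewrite sum1_card.
exact: card2.
Qed.
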